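(* Let $X$ be a real linear space, $T$ an infinite index set, and $f, f_t : X \to \overline{\mathbb{R}} := \mathbb{R}\cup\{\pm\infty\}$ ($t \in T$) convex proper functions. Let $h:=\sup_{t\in T} f_t$, $\Delta_1 := \operatorname{dom} f\cap\operatorname{dom} h$, and $$\sup(D_1) := \sup_{s\ge0}\inf_{x\in\Delta_1}\big(f(x)+s\,h(x)\big).$$ Let $v_1:\mathbb{R}\to\overline{\mathbb{R}}$, $v_1(r):=\inf\{f(x): h(x)\le r\}$, and let $\overline{v}_1$ be its lower semicontinuous hull, so $\overline{v}_1(0)=\min\{v_1(0),\liminf_{r\to0}v_1(r)\}$. Assume that either $\overline{v}_1(0)\neq+\infty$ or $\sup(D_1)\ne-\infty$. Then $$\sup(D_1) = \lim_{\varepsilon\downarrow0}\inf\{f(x): f_t(x)\le\varepsilon \text{ for all } t\in T\}.$$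
   Context: $\operatorname{dom} g := \{x : g(x)<+\infty\}$; a proper function never takes the value $-\infty$ and has nonempty domain. Conventions: $\inf\emptyset=+\infty$, $\sup\emptyset=-\infty$. The limit on the right exists in $\overline{\mathbb{R}}$ since the infimum is non-increasing in $\varepsilon$. *)

(* Defs.v *)
From HB Require Import structures.
From mathcomp Require Import all_boot all_order all_algebra.
From mathcomp Require Import all_classical all_reals all_analysis.
Set Implicit Arguments. Unset Strict Implicit. Unset Printing Implicit Defensive.
Import Order.TTheory GRing.Theory Num.Theory.
Local Open Scope classical_set_scope.
Local Open Scope ring_scope.
Local Open Scope ereal_scope.

Section defs.
Variables (R : realType) (X : lmodType R).

Definition edom (g : X -> \bar R) : set X := [set x | g x < +oo].

Definition eproper (g : X -> \bar R) : Prop :=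
  (forall x, g x != -oo) /\ edom g !=set0.

(* convexity of an extended-real valued function (used for proper functions,
   which take values in R u {+oo}; with l in ]0,1[ the products are well
   defined: l * (+oo) = +oo) *)
Definition econvex (g : X -> \bar R) : Prop :=
  forall (x y : X) (l : R), (0 < l)%R -> (l < 1)%R ->
    g ((l *: x + (1 - l) *: y)%R) <= l%:E * g x + (1 - l)%:E * g y.

Definition esupfam (T : Type) (ft : T -> X -> \bar R) : X -> \bar R :=
  fun x => ereal_sup [set ft t x | t in [set: T]].

Definition supD1 (f h : X -> \bar R) : \bar R :=
  ereal_sup [set ereal_inf [set f x + s%:E * h x | x in edom f `&` edom h]
            | s in [set s : R | (0 <= s)%R]].

Definition v1 (f h : X -> \bar R) (r : R) : \bar R :=
  ereal_inf [set f x | x in [set x | h x <= r%:E]].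

Definition v1bar0 (f h : X -> \bar R) : \bar R :=
  Order.min (v1 f h 0) (lime_inf (v1 f h) 0).

Definition infeps (T : Type) (f : X -> \bar R) (ft : T -> X -> \bar R)
  (eps : R) : \bar R :=
  ereal_inf [set f x | x in [set x | forall t, ft t x <= eps%:E]].

End defs.

(* Main.v *)
Require Import Defs.
From HB Require Import structures.
From mathcomp Require Import all_boot all_order all_algebra.
From mathcomp Require Import all_classical all_reals all_analysis.
From mathcomp Require Import lra.
Import Order.TTheory GRing.Theory Num.Theory.
Local Open Scope classical_set_scope.
Local Open Scope ring_scope.
Local Open Scope ereal_scope.

Lemma ereal_le_by_real (R : realType) (x y : \bar R) :
  (forall r : R, r%:E < x -> r%:E <= y) -> x <= y.
Proof.
move=> H; case: x H => [x| |] H.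
- case: y H => [y| |] H.
  + rewrite lee_fin; apply/ler_addgt0Pr => e e0.
    have := H (x - e)%R; rewrite lte_fin ltrBlDr ltrDl e0 lee_fin => /(_ isT).
    by rewrite lerBlDr.
  + by rewrite leey.
  + by have := H (x - 1)%R; rewrite lte_fin ltrBlDr ltrDl ltr01 leeNy_eq => /(_ isT).
- case: y H => [y| |] H //.
  + by have := H (y + 1)%R; rewrite ltry lee_fin => /(_ isT) ?; exfalso; lra.
  + by have := H 0%R; rewrite ltry leeNy_eq => /(_ isT).
- by rewrite leNye.
Qed.

Lemma keyG (R : realType) (X : lmodType R) (f h : X -> \bar R) (b r0 : R) :
  econvex f -> econvex h -> (forall z, h z <= r0%:E -> b%:E < f z) ->
  forall x y (fx hx fy hy c : R), f x = fx%:E -> h x = hx%:E -> f y = fy%:E ->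
  h y = hy%:E -> (hy < c)%R -> (c <= r0)%R -> (c < hx)%R ->
  (0 < (c - hy) * (fx - b) + (hx - c) * (fy - b))%R.
Proof.
move=> fc hc Hr x y fx hx fy hy c efx ehx efy ehy h1 h2 h3.
pose l := ((c - hy) / (hx - hy))%R.
have D0 : (0 < hx - hy)%R by lra.
have l0 : (0 < l)%R by rewrite divr_gt0 // subr_gt0.
have l1 : (l < 1)%R by rewrite /l ltr_pdivrMr // mul1r; lra.
have lD : (l * (hx - hy) = c - hy)%R by rewrite /l divfK // gt_eqF.
have hz : h (l *: x + (1 - l) *: y)%R <= r0%:E.
  apply: le_trans (hc x y l l0 l1) _.
  by rewrite ehx ehy -!EFinM -EFinD lee_fin; nra.
have := Hr _ hz => /lt_le_trans /(_ (fc x y l l0 l1)).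
rewrite efx efy -!EFinM -EFinD lte_fin => H.
have H2 : (0 < l * fx + (1 - l) * fy - b)%R by rewrite subr_gt0.
have := mulr_gt0 D0 H2; nra.
Qed.

Theorem proposition3p1 (R : realType) (X : lmodType R) (T : Type)
  (f : X -> \bar R) (ft : T -> X -> \bar R) :
  infinite_set [set: T] ->
  eproper f -> econvex f ->
  (forall t, eproper (ft t)) -> (forall t, econvex (ft t)) ->
  (v1bar0 f (esupfam ft) != +oo \/ supD1 f (esupfam ft) != -oo) ->
  infeps f ft e @[e --> 0%R^'+] --> supD1 f (esupfam ft).
Proof.
move=> Tinf [fNinf _] fconv ftprop ftconv hyp.
have [t0 _] := infinite_setN0 Tinf.
have hN x : esupfam ft x != -oo.
  have : ft t0 x <= esupfam ft x by rewrite /esupfam; apply: ereal_sup_ubound; exists t0.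
  case: (ftprop t0) => /(_ x) ft0 _; apply: contraTN => /eqP ->.
  by rewrite leeNy_eq.
have hconv : econvex (esupfam ft).
  move=> x y l l0 l1; apply: ge_ereal_sup => _ [t _ <-].
  apply: le_trans (ftconv t x y l l0 l1) _.
  have ub z : ft t z <= esupfam ft z.
    by rewrite /esupfam; apply: ereal_sup_ubound; exists t.
  apply: leeD; apply: lee_wpmul2l => //; rewrite lee_fin ?subr_ge0 ltW //.
have infE : infeps f ft = v1 f (esupfam ft).
  apply/funext => e; rewrite /infeps /v1.
  have -> : [set x | forall t, ft t x <= e%:E] = [set x | esupfam ft x <= e%:E].
    apply/seteqP; split => x /=.
    - by move=> H; apply: ge_ereal_sup => _ [t _ <-]; exact: H.
    - by move=> H t; apply: le_trans H; rewrite /esupfam; apply: ereal_sup_ubound; exists t.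
  by [].
rewrite infE.
move: hyp hN hconv; set h := esupfam ft => hyp hN hconv.
have fin_f x : f x < +oo -> f x = (fine (f x))%:E.
  by move=> fx; rewrite fineK // fin_numE fNinf lt_eqF.
have fin_h x : h x < +oo -> h x = (fine (h x))%:E.
  by move=> hx; rewrite fineK // fin_numE hN lt_eqF.
have vni r s : (r <= s)%R -> v1 f h s <= v1 f h r.
  move=> rs; apply: le_ereal_inf_tmp => _ [x /= hx <-].
  by apply: ereal_inf_lbound; exists x => //=; apply: le_trans hx _; rewrite lee_fin.
suff <- : ereal_sup (v1 f h @` [set` Interval (BRight 0%R) (BInfty R false)])
   = supD1 f h.
  apply: nonincreasing_at_right_cvge => //.
  by move=> r s _ _ /vni.
set L := ereal_sup _.
apply/eqP; rewrite eq_le; apply/andP; split.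
apply: ereal_le_by_real => b bL.
have [_ [r0 /= r0I <-] bv] := ereal_sup_gt bL.
have r00 : (0 < r0)%R by move: r0I; rewrite in_itv /= andbT.
have Hr z : h z <= r0%:E -> b%:E < f z.
  by move=> hz; apply: lt_le_trans bv _; apply: ereal_inf_lbound; exists z.
suff [s [s0 Hs]] : exists s : R, (0 <= s)%R /\
    forall x, edom f x -> edom h x -> b%:E <= f x + s%:E * h x.
  apply: le_trans (_ : ereal_inf [set f x + s%:E * h x | x in edom f `&` edom h] <= _).
    by apply: le_ereal_inf_tmp => _ [x [fx hx] <-]; exact: Hs.
  by apply: ereal_sup_ubound; exists s.
have [[w [[fw hw] hwr]]|nw] :=
  pselect (exists w, (edom f w /\ edom h w) /\ h w < r0%:E).
  have efw := fin_f w fw; have ehw := fin_h w hw.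
  set fw' := fine (f w) in efw; set hw' := fine (h w) in ehw.
  have hwr' : (hw' < r0)%R by rewrite -lte_fin -ehw.
  have fwb : (b < fw')%R by rewrite -lte_fin -efw; apply: Hr; rewrite ltW.
  pose K := ((fw' - b) / (r0 - hw'))%R.
  have K0 : (0 < K)%R by rewrite divr_gt0 // subr_gt0.
  have KD : (K * (r0 - hw') = fw' - b)%R by rewrite /K divfK // gt_eqF // subr_gt0.
  pose S := [set t : R | t = 0%R \/ exists x, [/\ edom f x, edom h x,
     (0 < fine (h x))%R & t = ((b - fine (f x)) / fine (h x))%R]].
  have SK : ubound S K.
    move=> t [->|[x [fx hx hx0 ->]]]; first exact: ltW.
    have efx := fin_f x fx; have ehx := fin_h x hx.
    set fx' := fine (f x) in efx hx0 *; set hx' := fine (h x) in ehx hx0 *.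
    rewrite ler_pdivrMr //.
    have [hxr|hxr] := leP hx' r0.
      have : (b < fx')%R by rewrite -lte_fin -efx; apply: Hr; rewrite ehx lee_fin.
      by move=> ?; have := mulr_gt0 K0 hx0; lra.
    have G := keyG _ _ _ _ _ _ fconv hconv Hr _ _ _ _ _ _ _ efx ehx efw ehw hwr' (lexx r0) hxr.
    have H1 : (0 < r0 - hw')%R by rewrite subr_gt0.
    nra.
  have hS : has_sup S by split; [exists 0%R; left | exists K].
  have s0 : (0 <= sup S)%R by apply: sup_upper_bound => //; left.
  exists (sup S); split => // x fx hx.
  have efx := fin_f x fx; have ehx := fin_h x hx.
  set fx' := fine (f x) in efx *; set hx' := fine (h x) in ehx *.
  rewrite efx ehx -EFinM -EFinD lee_fin.
  have [hpos|hnpos] := ltP 0%R hx'.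
    have : ((b - fx') / hx' <= sup S)%R.
      by apply: sup_upper_bound => //; right; exists x.
    by rewrite ler_pdivrMr // => ?; lra.
  have fxb : (b < fx')%R.
    by rewrite -lte_fin -efx; apply: Hr; rewrite ehx lee_fin (le_trans hnpos) // ltW.
  have [hz|hneg] := eqVneq hx' 0%R.
    by rewrite hz mulr0 addr0 ltW.
  have hneg' : (hx' < 0)%R by rewrite lt_neqAle hneg hnpos.
  have : (sup S <= (fx' - b) / (- hx'))%R.
    apply: ge_sup; first by exists 0%R; left.
    move=> t [->|[y [fy hy hy0 ->]]].
      by rewrite divr_ge0 // ?oppr_ge0 ?subr_ge0 ltW.
    have efy := fin_f y fy; have ehy := fin_h y hy.
    set fy' := fine (f y) in efy hy0 *; set hy' := fine (h y) in ehy hy0 *.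
    have G := keyG _ _ _ _ _ _ fconv hconv Hr _ _ _ _ _ _ _ efy ehy efx ehx hneg' (ltW r00) hy0.
    rewrite ler_pdivlMr ?oppr_gt0 // mulrAC ler_pdivrMr //; nra.
  by rewrite ler_pdivlMr ?oppr_gt0 // => ?; nra.
have nw' x : edom f x -> edom h x -> r0%:E <= h x.
  by move=> fx hx; rewrite leNgt; apply/negP => ?; apply: nw; exists x.
have vinf r : (r < r0)%R -> v1 f h r = +oo.
  move=> rr; apply/eqP; rewrite -leye_eq; apply: le_ereal_inf_tmp => _ [x /= hx <-].
  have [fx|] := ltP (f x) +oo; last by [].
  have := nw' x fx (le_lt_trans hx (ltry _)).
  move=> H1; have := le_trans H1 hx; rewrite lee_fin => H2.
  by exfalso; move: (lt_le_trans rr H2); rewrite ltxx.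
have vb : v1bar0 f h = +oo.
  rewrite /v1bar0 vinf //.
  have -> : lime_inf (v1 f h) 0 = +oo; last by rewrite minxx.
  apply/eqP; rewrite -leye_eq lime_infE; apply: ereal_sup_ge.
  eexists; first by exists r0 => //; rewrite in_itv /= r00.
  rewrite /= leeNr; apply: ge_ereal_sup => _ [y [yb _] <-] /=.
  rewrite vinf //; move: yb; rewrite /ball /= sub0r normrN => yb.
  exact: le_lt_trans (ler_norm y) yb.
have dN : supD1 f h != -oo by case: hyp => //; rewrite vb.
have [[s0 s00 ds0]|H] := pselect (exists2 s0 : R, (0 <= s0)%R &
    ereal_inf [set f x + s0%:E * h x | x in edom f `&` edom h] != -oo); last first.
  exfalso; move/negP: dN; apply; rewrite /supD1 -leeNy_eq.
  apply: ge_ereal_sup => _ [s /= s1 <-]; rewrite leeNy_eq.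
  by apply/negPn/negP => hs; apply: H; exists s.
have [c hc] : exists c : R, c%:E <= ereal_inf [set f x + s0%:E * h x | x in edom f `&` edom h].
  move: ds0; case: (ereal_inf _) => [c'| |] // _.
    by exists c'.
  by exists 0%R; rewrite leey.
pose m := Num.max 0%R ((b - c) / r0)%R.
have m0 : (0 <= m)%R by rewrite le_max lexx.
have m1 : ((b - c) / r0 <= m)%R by rewrite le_max lexx orbT.
have m2 : (b - c <= m * r0)%R by rewrite -ler_pdivrMr.
exists (s0 + m)%R; split; first exact: addr_ge0.
move=> x fx hx.
have hxr := nw' x fx hx.
have : c%:E <= f x + s0%:E * h x.
  by apply: le_trans hc _; apply: ereal_inf_lbound; exists x.
rewrite (fin_f x fx) (fin_h x hx) in hxr * => cx.
move: cx; rewrite -!EFinM -!EFinD !lee_fin in hxr * => cx.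
nra.
rewrite /supD1; apply: ge_ereal_sup => _ [s /= s0 <-].
set ds := ereal_inf _.
apply/lee_addgt0Pr => e e0.
pose eps := (e / (s + 1))%R.
have s1 : (0 < s + 1)%R by rewrite ltr_wpDl.
have eps0 : (0 < eps)%R by rewrite divr_gt0.
have epsE : (eps * (s + 1) = e)%R by rewrite /eps divfK // gt_eqF.
have seps : (s * eps <= e)%R by nra.
have vL : v1 f h eps <= L.
  by apply: ereal_sup_ubound; exists eps => //=; rewrite in_itv /= eps0.
have : ds - e%:E <= v1 f h eps.
  apply: le_ereal_inf_tmp => _ [x /= hx <-].
  rewrite EFinN leeBlDr //.
  have [fx|] := ltP (f x) +oo; last first.
    by rewrite leye_eq => /eqP ->; rewrite addye // leey.
  have hx' : h x < +oo by apply: le_lt_trans hx (ltry _).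
  apply: le_trans (_ : f x + s%:E * h x <= _).
    by apply: ereal_inf_lbound; exists x.
  move: hx; rewrite (fin_f x fx) (fin_h x hx') -EFinM -!EFinD !lee_fin lerD2l => hx.
  apply: le_trans seps; exact: ler_wpM2l.
move=> H; rewrite -leeBlDr //; exact: le_trans H vL.
Qed.
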